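(* Let $K\ge2$, $0<q<p$ with $p+(K-1)q=1$. Each of the maps $\phi\mapsto\mathrm{Inv}(\phi)$, $\phi\mapsto\mathrm{InvP}(\phi)$, $\phi\mapsto\mathrm{InvN}(\phi)$, $\phi\mapsto\mathrm{MLE}^*(\phi)$, defined on $\Delta$ with values in $\mathbb{R}^K$, is continuous.
   Context: $\Delta=\{\theta\in\mathbb{R}^K:\theta_i\ge0,\sum_i\theta_i=1\}$. $\mathrm{Inv}(\phi)_i=\frac{\phi_i-q}{p-q}$; $\mathrm{InvN}(\phi)_i=\frac{\max(0,\mathrm{Inv}(\phi)_i)}{\sum_j\max(0,\mathrm{Inv}(\phi)_j)}$; $\mathrm{InvP}(\phi)=\arg\min_{\theta\in\Delta}\|\theta-\mathrm{Inv}(\phi)\|_2$. $\mathrm{MLE}^*(\phi)$: for real $\tau$ let $m(\tau)=|\{i:\phi_i<\tau\}|$, $c_\tau=\frac{1-m(\tau)q}{\sum_{i:\phi_i\ge\tau}\phi_i}$; let $\tau^*$ be the smallest $\tau\in\{\phi_1,\dots,\phi_K\}$ with $c_\tau\phi_i\ge q$ for all $i$ with $\phi_i\ge\tau$; $\mathrm{MLE}^*(\phi)_i=0$ if $\phi_i<\tau^*$ and $\frac{c_{\tau^*}\phi_i-q}{p-q}$ otherwise. *)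

(* Defs.v *)
From HB Require Import structures.
From mathcomp Require Import all_boot all_order all_algebra.
From mathcomp Require Import all_classical all_reals all_analysis.
Set Implicit Arguments. Unset Strict Implicit. Unset Printing Implicit Defensive.
Import Order.TTheory GRing.Theory Num.Theory.
Import numFieldNormedType.Exports.
Local Open Scope ring_scope.
Local Open Scope classical_set_scope.

Section Defs.
Variables (R : realType) (K : nat).
Implicit Types (phi theta : 'rV[R]_K).

Definition Delta : set 'rV[R]_K :=
  [set theta | (forall i, 0 <= theta ord0 i) /\ \sum_i theta ord0 i = 1].

Variables (p q : R).

Definition Invmap phi : 'rV[R]_K := \row_i ((phi ord0 i - q) / (p - q)).

Definition InvNmap phi : 'rV[R]_K :=
  \row_i (Num.max 0 (Invmap phi ord0 i) / \sum_j Num.max 0 (Invmap phi ord0 j)).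

(* squared Euclidean distance (same minimizers as the l2 distance) *)
Definition sqdist (u v : 'rV[R]_K) : R := \sum_i (u ord0 i - v ord0 i) ^+ 2.

Definition InvPmap phi : 'rV[R]_K :=
  xget 0 [set theta | Delta theta /\
           forall eta, Delta eta -> sqdist theta (Invmap phi) <= sqdist eta (Invmap phi)].

Definition mcount phi (tau : R) : nat := #|[set i : 'I_K | phi ord0 i < tau]|.

Definition ctau phi (tau : R) : R :=
  (1 - (mcount phi tau)%:R * q) / \sum_(i | tau <= phi ord0 i) phi ord0 i.

Definition tau_ok phi (tau : R) : Prop :=
  (exists i, tau = phi ord0 i) /\
  (forall i, tau <= phi ord0 i -> q <= ctau phi tau * phi ord0 i).

Definition tau_star phi : R :=
  xget 0 [set tau | tau_ok phi tau /\ forall tau', tau_ok phi tau' -> tau <= tau'].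

Definition MLEstar phi : 'rV[R]_K :=
  \row_i (if phi ord0 i < tau_star phi then 0
          else (ctau phi (tau_star phi) * phi ord0 i - q) / (p - q)).
End Defs.

(* Main.v *)
Require Import Defs.
From HB Require Import structures.
From mathcomp Require Import all_boot all_order all_algebra.
From mathcomp Require Import all_classical all_reals all_analysis.
From mathcomp Require Import ring lra.
Import Order.TTheory GRing.Theory Num.Theory.
Import numFieldNormedType.Exports.
Local Open Scope ring_scope.
Local Open Scope classical_set_scope.

Lemma row_cont (T : topologicalType) (R : realType) K (f : T -> 'I_K -> R) :
  (forall i, continuous (fun x => f x i)) -> continuous (fun x => \row_i f x i).
Proof.
move=> fc x; apply/cvg_ballP => e e0.
have H : \forall y \near x, forall i, ball (f x i) e (f y i).
  apply: filter_forall => i; exact: (cvg_ball (fc i x)).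
apply: filterS H => y Hy.
rewrite /ball /=.
split => // i j; rewrite !mxE; exact: Hy.
Qed.

Section Cont.
Variables (T : topologicalType) (R : realType).
Implicit Types (f g : T -> R).

Lemma cont_cst (c : R) : continuous (fun _ : T => c).
Proof. by move=> x; exact: cvg_cst. Qed.

Lemma cont_add f g : continuous f -> continuous g -> continuous (fun x => f x + g x).
Proof. by move=> cf cg x; apply: cvgD; [exact: cf|exact: cg]. Qed.

Lemma cont_opp f : continuous f -> continuous (fun x => - f x).
Proof. by move=> cf x; apply: cvgN; exact: cf. Qed.

Lemma cont_sub f g : continuous f -> continuous g -> continuous (fun x => f x - g x).
Proof. by move=> cf cg; apply: cont_add => //; exact: cont_opp. Qed.

Lemma cont_mul f g : continuous f -> continuous g -> continuous (fun x => f x * g x).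
Proof. by move=> cf cg x; apply: cvgM; [exact: cf|exact: cg]. Qed.

Lemma cont_max f g : continuous f -> continuous g -> continuous (fun x => Num.max (f x) (g x)).
Proof. by move=> cf cg x; apply: (@continuous_max _ _ f g x); [exact: cf|exact: cg]. Qed.

Lemma cont_inv1 f : continuous f -> continuous (fun x => (Num.max 1 (f x))^-1).
Proof.
move=> cf x; apply: cvgV.
  by rewrite gt_eqF // (lt_le_trans ltr01) // le_max lexx.
have := @cont_max (fun=> 1) f (cont_cst 1) cf x. exact.
Qed.

Lemma cont_sum (I : Type) (r : seq I) (P : pred I) (F : I -> T -> R) :
  (forall i, continuous (F i)) -> continuous (fun x => \sum_(i <- r | P i) F i x).
Proof.
move=> cF; elim: r => [|a r IH].
  under eq_fun => x do rewrite big_nil; exact: cont_cst.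
under eq_fun => x do rewrite big_cons.
case: (P a) => //; exact: cont_add.
Qed.

Lemma cont_bigmax (I : Type) (r : seq I) (F : I -> T -> R) (x0 : R) :
  (forall i, continuous (F i)) -> continuous (fun x => \big[Num.max/x0]_(i <- r) F i x).
Proof.
move=> cF; elim: r => [|a r IH].
  under eq_fun => x do rewrite big_nil; exact: cont_cst.
under eq_fun => x do rewrite big_cons.
exact: cont_max.
Qed.
End Cont.

Lemma cont_coord (R : realType) K i : continuous (fun phi : 'rV[R]_K => phi ord0 i).
Proof. exact: coord_continuous. Qed.

Lemma within_of (T U : topologicalType) (A : set T) (f g : T -> U) :
  continuous g -> {in A, f =1 g} -> {within A, continuous f}.
Proof.
move=> cg e; apply: (@subspace_eq_continuous _ A _ g f).
  by move=> x Ax; rewrite e.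
exact: continuous_subspaceT.
Qed.

Section Main.
Variables (R : realType) (K : nat) (p q : R).
Hypotheses (hK : (2 <= K)%N) (hq : 0 < q) (hqp : q < p)
  (hpK : p + (K - 1)%N%:R * q = 1).

Lemma pq_eq : p - q = 1 - K%:R * q.
Proof.
have h := hpK; rewrite natrB ?(leq_trans _ hK) // mulr1n in h.
apply/eqP; rewrite -subr_eq0.
have -> : p - q - (1 - K%:R * q) = (p + (K%:R - 1) * q) - 1 by ring.
by rewrite h subrr.
Qed.

Lemma pq_gt0 : 0 < p - q. Proof. by rewrite subr_gt0. Qed.

Lemma Inv_cont : continuous (Invmap p q : 'rV[R]_K -> 'rV[R]_K).
Proof.
rewrite /Invmap; apply: row_cont => i; apply: cont_mul; last exact: cont_cst.
apply: cont_sub; [exact: cont_coord | exact: cont_cst].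
Qed.

Lemma Inv_i_cont i : continuous (fun phi : 'rV[R]_K => Invmap p q phi ord0 i).
Proof.
move=> x; exact: (@continuous_comp _ _ _ (Invmap p q) (fun v : 'rV[R]_K => v ord0 i) x (Inv_cont x) (@cont_coord R K i (Invmap p q x))).
Qed.

Lemma sum_Inv (phi : 'rV[R]_K) : Delta phi -> \sum_j Invmap p q phi ord0 j = 1.
Proof.
move=> [_ s1].
under eq_bigr => j _ do rewrite mxE.
rewrite -mulr_suml sumrB s1 sumr_const card_ord -mulr_natl mulrC -pq_eq.
by rewrite mulVf // gt_eqF // pq_gt0.
Qed.

Definition InvNg (phi : 'rV[R]_K) : 'rV[R]_K :=
  \row_i (Num.max 0 (Invmap p q phi ord0 i) *
          (Num.max 1 (\sum_j Num.max 0 (Invmap p q phi ord0 j)))^-1).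

Lemma InvN_within : {within @Delta R K, continuous (InvNmap p q)}.
Proof.
apply: (@within_of _ _ _ _ InvNg).
  apply: row_cont => i; apply: cont_mul.
    apply: cont_max; [exact: cont_cst| exact: Inv_i_cont].
  apply: cont_inv1; apply: cont_sum => j.
  apply: cont_max; [exact: cont_cst| exact: Inv_i_cont].
move=> phi; rewrite inE => Dphi; apply/rowP => i; rewrite !mxE.
congr (_ * _^-1); apply/esym/max_idPr.
rewrite -(sum_Inv _ Dphi); apply: ler_sum => j _; by rewrite le_max lexx orbT.
Qed.

Lemma Inv_within : {within @Delta R K, continuous (Invmap p q)}.
Proof. exact: continuous_subspaceT Inv_cont. Qed.
End Main.

Section Proj.
Variables (R : realType) (K : nat).
Hypothesis (hK : (0 < K)%N).

Lemma cont_sq (T : topologicalType) (f : T -> R) : continuous f -> continuous (fun x => f x ^+ 2).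
Proof. by move=> cf; under eq_fun => x do rewrite expr2; exact: cont_mul. Qed.

Lemma Delta_closed : closed (@Delta R K).
Proof.
have -> : @Delta R K = (\bigcap_(i in setT) ((fun th : 'rV[R]_K => th ord0 i) @^-1` [set x | 0 <= x]))
   `&` ((fun th : 'rV[R]_K => \sum_i th ord0 i) @^-1` [set x | x = 1]).
  apply/seteqP; split => th.
    by move=> [h1 h2]; split => //= i _; exact: h1.
  by move=> [/= h1 h2]; split => // i; exact: h1.
apply: closedI.
  apply: closed_bigI => i _; apply: preimage_closed; last exact: closed_ge.
  by move=> x _; exact: cont_coord.
apply: preimage_closed; last exact: closed_eq.
by move=> x _; apply: cont_sum => i; exact: cont_coord.
Qed.

Lemma Delta_le1 (th : 'rV[R]_K) i : Delta th -> th ord0 i <= 1.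
Proof.
move=> [h1 <-]; rewrite (bigD1 i) //= lerDl sumr_ge0 // => j _; exact: h1.
Qed.

Lemma Delta_compact : compact (@Delta R K).
Proof.
apply: (@subclosed_compact _ _ [set v : 'rV[R]_K | forall i, `[(0:R), 1]%classic (v ord0 i)] Delta_closed).
  exact: (@rV_compact _ K (fun=> `[(0:R), 1]%classic) (fun _ => @segment_compact R 0 1)).
move=> th Dth i /=; rewrite in_itv /= Delta_le1 // andbT; by case: Dth.
Qed.

Lemma Delta_nonempty : (@Delta R K) !=set0.
Proof.
exists (\row_i (K%:R)^-1); split => [i|]; first by rewrite mxE invr_ge0 ler0n.
under eq_bigr => i _ do rewrite mxE.
by rewrite sumr_const card_ord -[_ *+ K]mulr_natr mulVf // pnatr_eq0 -lt0n.
Qed.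

Lemma sqdist_cont_l (v : 'rV[R]_K) : continuous (fun th => sqdist th v).
Proof.
rewrite /sqdist; apply: cont_sum => i; apply: cont_sq; apply: cont_sub; [exact: cont_coord| exact: cont_cst].
Qed.

Lemma proj_exists (v : 'rV[R]_K) : exists a, Delta a /\ forall eta, Delta eta -> sqdist a v <= sqdist eta v.
Proof.
have [c cA cmin] := EVT_min_rV Delta_nonempty Delta_compact (continuous_subspaceT (sqdist_cont_l v)).
exists c; split; first by move: cA; rewrite inE.
by move=> eta De; apply: cmin; rewrite inE.
Qed.

Lemma VI (v a : 'rV[R]_K) : Delta a -> (forall eta, Delta eta -> sqdist a v <= sqdist eta v) ->
  forall eta, Delta eta -> \sum_i (v ord0 i - a ord0 i) * (eta ord0 i - a ord0 i) <= 0.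
Proof.
move=> Da amin eta De.
set X := \sum_i (a ord0 i - v ord0 i) * (eta ord0 i - a ord0 i).
set Y := \sum_i (eta ord0 i - a ord0 i) ^+ 2.
have Y0 : 0 <= Y by apply: sumr_ge0 => i _; exact: sqr_ge0.
have key : forall t, 0 < t -> t <= 1 -> 0 <= 2 * X + t * Y.
  move=> t t0 t1.
  pose z := \row_i (a ord0 i + t * (eta ord0 i - a ord0 i)).
  have Dz : Delta z.
    case: Da => Da1 Da2; case: De => De1 De2; split.
      move=> i; rewrite mxE.
      have := Da1 i; have := De1 i; nra.
    under eq_bigr => i _ do rewrite mxE.
    rewrite big_split /= -mulr_sumr sumrB Da2 De2; ring.
  have E : sqdist z v = sqdist a v + t * (2 * X + t * Y).
    rewrite /sqdist /X /Y !mulr_sumr -big_split /= mulr_sumr -big_split /=.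
    by apply: eq_bigr => i _; rewrite mxE; ring.
  have := amin z Dz; rewrite E lerDl pmulr_rge0 //.
have X0 : 0 <= X.
  rewrite leNgt; apply/negP => Xn.
  pose t := (- X) / (Y - X).
  have YX : 0 < Y - X by lra.
  have t0 : 0 < t by rewrite /t divr_gt0 // oppr_gt0.
  have t1 : t <= 1 by rewrite /t ler_pdivrMr // mul1r; lra.
  have k := key t t0 t1.
  have E : (2 * X + t * Y) * (Y - X) = X * (Y - 2 * X).
    by rewrite /t; field; rewrite gt_eqF.
  have : 0 <= (2 * X + t * Y) * (Y - X) by apply: mulr_ge0 => //; lra.
  rewrite E; nra.
have -> : \sum_i (v ord0 i - a ord0 i) * (eta ord0 i - a ord0 i) = - X.
  by rewrite /X -sumrN; apply: eq_bigr => i _; ring.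
by rewrite oppr_le0.
Qed.

Lemma nonexp (u w a b : 'rV[R]_K) :
  Delta a -> (forall eta, Delta eta -> sqdist a u <= sqdist eta u) ->
  Delta b -> (forall eta, Delta eta -> sqdist b w <= sqdist eta w) ->
  sqdist a b <= sqdist u w.
Proof.
move=> Da amin Db bmin.
have V1 := @VI u a Da amin b Db; have V2 := @VI w b Db bmin a Da.
move: V1 V2.
set P1 := \sum_i _; set P2 := \sum_i _ => V1 V2.
rewrite /sqdist.
set S1 := \sum_i _; set S2 := \sum_i _.
have H : 2 * S1 <= 2 * (P1 + P2) + S1 + S2.
  rewrite /S1 /S2 /P1 /P2 -big_split /= !mulr_sumr -!big_split /=; apply: ler_sum => i _.
  set A := a ord0 i; set B := b ord0 i; set U := u ord0 i; set W := w ord0 i.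
  have := sqr_ge0 (B - A - (W - U)); nra.
lra.
Qed.
End Proj.

Section PMain.
Variables (R : realType) (K : nat) (p q : R).
Hypotheses (hK : (2 <= K)%N) (hq : 0 < q) (hqp : q < p)
  (hpK : p + (K - 1)%N%:R * q = 1).

Lemma hK0 : (0 < K)%N. Proof. exact: leq_trans hK. Qed.

Lemma InvP_spec (phi : 'rV[R]_K) : Delta (InvPmap p q phi) /\
  forall eta, Delta eta -> sqdist (InvPmap p q phi) (Invmap p q phi) <= sqdist eta (Invmap p q phi).
Proof. have := @proj_exists R K hK0 (Invmap p q phi). move/(xgetPex 0). exact. Qed.

Lemma InvP_cont : continuous (InvPmap p q : 'rV[R]_K -> 'rV[R]_K).
Proof.
have -> : InvPmap p q = fun x : 'rV[R]_K => \row_i InvPmap p q x ord0 i.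
  by apply/funext => x; apply/rowP => i; rewrite mxE.
apply: row_cont => i x; apply/(@cvgrPdist_lt _ _ _ (nbhs x) _) => e e0.
have h : continuous (fun y => sqdist (Invmap p q y) (Invmap p q x)).
  rewrite /sqdist; apply: cont_sum => j; apply: cont_sq; apply: cont_sub; last exact: cont_cst.
  exact: Inv_i_cont.
have := h x; move=> /cvgrPdist_lt/(_ (e ^+ 2) (exprn_gt0 2 e0)).
apply: filterS => y /=.
have -> : sqdist (Invmap p q x) (Invmap p q x) = 0.
  by rewrite /sqdist big1 // => j _; rewrite subrr expr0n.
rewrite sub0r normrN => hy.
have hy' := ler_norm (sqdist (Invmap p q y) (Invmap p q x)).
have nb := @nonexp R K _ _ _ _ (InvP_spec y).1 (InvP_spec y).2 (InvP_spec x).1 (InvP_spec x).2.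
have ci : (InvPmap p q y ord0 i - InvPmap p q x ord0 i) ^+ 2 <= sqdist (InvPmap p q y) (InvPmap p q x).
  rewrite /sqdist (bigD1 i) //= lerDl sumr_ge0 // => j _; exact: sqr_ge0.
set d := InvPmap p q y ord0 i - InvPmap p q x ord0 i in ci.
have : d ^+ 2 < e ^+ 2 by lra.
rewrite ltr_norml /d => hd; apply/andP; split; nra.
Qed.

Lemma InvP_within : {within @Delta R K, continuous (InvPmap p q)}.
Proof. exact: continuous_subspaceT InvP_cont. Qed.
End PMain.

Section MLE.
Variables (R : realType) (K : nat) (p q : R).
Hypotheses (hK : (2 <= K)%N) (hq : 0 < q) (hqp : q < p)
  (hpK : p + (K - 1)%N%:R * q = 1).

Lemma sum_if (P : pred 'I_K) (F : 'I_K -> R) :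
  \sum_(i | P i) F i = \sum_i (if P i then F i else 0).
Proof. exact: big_mkcond. Qed.

Lemma mcountE (phi : 'rV[R]_K) t : ((mcount phi t)%:R : R) = \sum_(i | phi ord0 i < t) 1.
Proof.
rewrite /mcount sumr_const; congr (_%:R); apply: eq_card => i.
by rewrite unfold_in /= asboolb.
Qed.

Lemma count_split (phi : 'rV[R]_K) t :
  ((mcount phi t)%:R : R) + \sum_(i | t <= phi ord0 i) 1 = K%:R.
Proof.
rewrite mcountE.
have -> : (K%:R : R) = \sum_(i < K) (1:R) by rewrite sumr_const card_ord.
rewrite [RHS](bigID (fun i => phi ord0 i < t)) /=; congr (_ + _).
by apply: eq_bigl => i; rewrite -leNgt.
Qed.

Definition sfun (phi : 'rV[R]_K) : R :=
  \big[Num.max/0]_(T : {set 'I_K}) ((\sum_(i in T) phi ord0 i) / (p - q + #|T|%:R * q)).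

Definition MLEg (phi : 'rV[R]_K) : 'rV[R]_K :=
  \row_i (Num.max 0 (phi ord0 i * (Num.max 1 (sfun phi))^-1 - q) / (p - q)).

Lemma sfun_cont : continuous sfun.
Proof.
rewrite /sfun; apply: cont_bigmax => T; apply: cont_mul; last exact: cont_cst.
apply: cont_sum => i; exact: cont_coord.
Qed.

Lemma MLEg_cont : continuous MLEg.
Proof.
apply: row_cont => i; apply: cont_mul; last exact: cont_cst.
apply: cont_max; first exact: cont_cst.
apply: cont_sub; last exact: cont_cst.
apply: cont_mul; first exact: cont_coord.
exact: cont_inv1 sfun_cont.
Qed.

Lemma MLE_eq (phi : 'rV[R]_K) : Delta phi -> MLEstar p q phi = MLEg phi.
Proof.
move=> Dphi; have [Dnn Dsum] := Dphi.
have hq0 : 0 < q := hq. have hqp0 : q < p := hqp.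
have pqK : p - q = 1 - K%:R * q := @pq_eq R K p q hK hpK.
have hK0 : (0 < K)%N by exact: leq_trans hK.
have hpK' : p + (K%:R - 1) * q = 1.
  by move: hpK; rewrite natrB ?(leq_trans _ hK) // mulr1n.
have e1 : (K%:R - 1) * q = K%:R * q - q by ring.
have Kq : K%:R * q < 1.
  move: hpK' hqp; move: (K%:R : R) => kK; nra.
pose j0 : 'I_K := Ordinal hK0.
pose i0 := [arg max_(i > j0) phi ord0 i]%O.
have i0max : forall j, phi ord0 j <= phi ord0 i0.
  rewrite /i0; case: arg_maxP => // i _ H j; exact: H.
have tm_pos : 0 < phi ord0 i0.
  have : \sum_i phi ord0 i <= \sum_(i < K) phi ord0 i0 by apply: ler_sum => i _.
  rewrite sumr_const card_ord Dsum -mulr_natr => h.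
  have := ler0n R K; nra.
have adm_ex : tau_ok q phi (phi ord0 i0).
  split; first by exists i0.
  move=> i hi; rewrite /ctau.
  set tm := phi ord0 i0 in hi *.
  have Bm : \sum_(i | tm <= phi ord0 i) phi ord0 i = (\sum_(i | tm <= phi ord0 i) (1:R)) * tm.
    rewrite mulr_suml; apply: eq_bigr => j hj; rewrite mul1r; apply/le_anti.
    by rewrite hj i0max.
  have cs := count_split phi tm.
  set k := \sum_(i | tm <= phi ord0 i) (1:R) in Bm cs.
  set M := ((mcount phi tm)%:R : R) in cs *.
  have k1 : 1 <= k.
    rewrite /k (bigD1 i0) //= lerDl sumr_ge0 //.
  have -> : phi ord0 i = tm by apply/le_anti; rewrite hi i0max.
  rewrite Bm.
  have -> : (1 - M * q) / (k * tm) * tm = (1 - M * q) / k.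
    by field; apply/andP; split; rewrite gt_eqF // (lt_le_trans ltr01).
  rewrite ler_pdivlMr ?(lt_le_trans ltr01) //.
  have : q * k = K%:R * q - M * q by rewrite -cs; ring.
  have := ler0n R (mcount phi tm).
  lra.
have [ts [ts_ok ts_min]] : exists t, tau_ok q phi t /\ forall t', tau_ok q phi t' -> t <= t'.
  pose P := fun j => `[< tau_ok q phi (phi ord0 j) >].
  have Pi0 : P i0 by apply/asboolP.
  case: (arg_minP (fun j => phi ord0 j) Pi0) => jm /asboolP okjm minj.
  exists (phi ord0 jm); split => // t' okt'.
  have [[j hj] _] := okt'; rewrite hj; apply: minj; apply/asboolP; rewrite -hj.
  exact: okt'.
have Hts : tau_ok q phi (tau_star q phi) /\ forall t', tau_ok q phi t' -> tau_star q phi <= t'.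
  have : exists t, tau_ok q phi t /\ forall t', tau_ok q phi t' -> t <= t' by exists ts.
  move/(xgetPex 0); exact.
case: Hts => [[[i1 ti1] adm] tmin].
rewrite /MLEg /MLEstar.
have [t tdef] : {t | tau_star q phi = t} by exists (tau_star q phi).
rewrite tdef in adm tmin ti1 *.
have cE0 : ctau q phi t = (1 - (mcount phi t)%:R * q) / \sum_(i | t <= phi ord0 i) phi ord0 i by [].
have cs := count_split phi t.
have [c cdef] : {c | ctau q phi t = c} by exists (ctau q phi t).
have [B Bdef] : {B | \sum_(i | t <= phi ord0 i) phi ord0 i = B} by exists (\sum_(i | t <= phi ord0 i) phi ord0 i).
have [M Mdef] : {M : R | (mcount phi t)%:R = M} by exists (mcount phi t)%:R.
have [k kdef] : {k : R | \sum_(i | t <= phi ord0 i) 1 = k} by exists (\sum_(i | t <= phi ord0 i) 1).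
rewrite cdef Bdef Mdef in cE0; rewrite Mdef kdef in cs; rewrite cdef in adm *.
have cE := cE0; clear cE0.
have ht1 : t <= phi ord0 i1 by rewrite ti1.
have k1 : 1 <= k by rewrite -kdef (bigD1 i1) //= lerDl sumr_ge0.
have B0 : 0 <= B by rewrite -Bdef; apply: sumr_ge0 => i _.
have ct : q <= c * t by have := adm i1 ht1; rewrite -ti1.
have Bpos : 0 < B.
  rewrite lt_def B0 andbT; apply/negP => /eqP B00.
  by move: ct; rewrite cE B00 invr0 mulr0 mul0r leNgt hq.
have Apos : 0 < 1 - M * q.
  have : M <= K%:R - 1 by lra.
  move=> hM; have h2 : M * q <= (K%:R - 1) * q by rewrite ler_pM2r.
  move: h2 hpK' hqp; move: (K%:R : R) => kK; lra.
have cpos : 0 < c by rewrite cE divr_gt0.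
have tpos : 0 < t by nra.
have below : forall j, phi ord0 j < t -> c * phi ord0 j < q.
  move=> j hj.
  case: (@arg_maxP _ _ _ j (fun k => phi ord0 k < t) (fun k => phi ord0 k) hj) => j0' hj0 maxj0.
  set t' := phi ord0 j0' in hj0 maxj0.
  have notok : ~ tau_ok q phi t'.
    by move=> ok; have := tmin _ ok; lra.
  have [i2 [hi2 ci2]] : exists i2, t' <= phi ord0 i2 /\ ctau q phi t' * phi ord0 i2 < q.
    apply: contra_notP notok => H; split; first by exists j0'.
    move=> i hi; rewrite leNgt; apply/negP => hlt; apply: H; by exists i.
  have c'E : ctau q phi t' = (1 - (mcount phi t')%:R * q) / \sum_(i | t' <= phi ord0 i) phi ord0 i by [].
  pose D := \sum_(i | phi ord0 i == t') (1:R).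
  have ME : M = (mcount phi t')%:R + D.
    rewrite -Mdef !mcountE /D (sum_if (fun i => phi ord0 i < t)) (sum_if (fun i => phi ord0 i < t')).
    rewrite (sum_if (fun i => phi ord0 i == t')) -big_split /=; apply: eq_bigr => i _.
    case: (ltP (phi ord0 i) t) => h.
      have h' := maxj0 i h.
      case: (ltgtP (phi ord0 i) t') => h2.
      - by rewrite ?(lt_eqF h2) ?addr0.
      - by have := lt_le_trans h2 h'; rewrite ltxx.
      - by rewrite ?h2 ?ltxx ?eqxx ?add0r.
    have h2 : t' < phi ord0 i by apply: lt_le_trans hj0 h.
    by rewrite ltNge (ltW h2) /= gt_eqF // addr0.
  have BE : \sum_(i | t' <= phi ord0 i) phi ord0 i = B + D * t'.
    rewrite -Bdef /D mulr_suml (sum_if (fun i => t' <= phi ord0 i)) (sum_if (fun i => t <= phi ord0 i)).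
    rewrite (sum_if (fun i => phi ord0 i == t')) -big_split /=; apply: eq_bigr => i _.
    case: (ltP (phi ord0 i) t) => h.
      have h' := maxj0 i h.
      case: (ltgtP (phi ord0 i) t') => h2.
      - by rewrite ?(lt_eqF h2) ?(leNgt t') ?h2 ?add0r ?addr0.
      - by have := lt_le_trans h2 h'; rewrite ltxx.
      - by rewrite ?h2 ?lexx ?eqxx ?add0r ?mul1r.
    have h2 : t' < phi ord0 i by apply: lt_le_trans hj0 h.
    by rewrite (ltW h2) gt_eqF // addr0.
  move: ci2 c'E ME BE.
  move: (ctau q phi t') ((mcount phi t')%:R : R) (\sum_(i | t' <= phi ord0 i) phi ord0 i) => c' M' B' ci2 c'E ME BE.
  have D0 : 0 <= D by apply: sumr_ge0.
  have t'0 : 0 <= t' by exact: Dnn.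
  have Dt : 0 <= D * t' by apply: mulr_ge0.
  have B'pos : 0 < B' by rewrite BE; lra.
  have Dq : 0 <= D * q by apply: mulr_ge0 => //; exact: ltW.
  have A'pos : 0 < 1 - M' * q.
    have : M' * q = M * q - D * q by rewrite ME; ring.
    lra.
  have c'pos : 0 < c' by rewrite c'E divr_gt0.
  have h1 : c' * t' < q by apply: le_lt_trans ci2; rewrite ler_pM2l.
  have e : c' * t' * B' = (1 - M' * q) * t'.
    by rewrite c'E; field; rewrite gt_eqF.
  have h2 : (1 - M' * q) * t' < q * B' by nra.
  have h3 : (1 - M * q) * t' < q * B.
    move: h2; rewrite BE ME.
    have -> : (1 - (M' + D) * q) * t' = (1 - M' * q) * t' - D * q * t' by ring.
    have -> : q * (B + D * t') = q * B + D * q * t' by ring.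
    lra.
  have e2 : c * t' * B = (1 - M * q) * t' by rewrite cE; field; rewrite gt_eqF.
  have h4 : c * t' < q by nra.
  apply: le_lt_trans h4; rewrite ler_pM2l //.
  exact: maxj0.
have sumE : \sum_i Num.max 0 (c * phi ord0 i - q) = p - q.
  have -> : \sum_i Num.max 0 (c * phi ord0 i - q) =
            \sum_(i | t <= phi ord0 i) (c * phi ord0 i - q).
    rewrite [RHS]big_mkcond; apply: eq_bigr => i _.
    case: (leP t (phi ord0 i)) => h.
      by apply/max_idPr; rewrite subr_ge0; exact: adm.
    by apply/max_idPl; have := below i h; lra.
  rewrite sumrB -mulr_sumr Bdef.
  have -> : \sum_(i | t <= phi ord0 i) q = k * q.
    by rewrite -kdef mulr_suml; apply: eq_bigr => i _; rewrite mul1r.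
  have -> : c * B = 1 - M * q by rewrite cE divfK // gt_eqF.
  have : k * q = K%:R * q - M * q by rewrite -cs; ring.
  move: pqK; move: (K%:R : R) => kK; lra.
have sle : sfun phi <= c^-1.
  apply: bigmax_le; first by rewrite invr_ge0 ltW.
  move=> T _.
  have Tq : 0 <= #|T|%:R * q by apply: mulr_ge0 => //; exact: ltW.
  have dpos : 0 < p - q + #|T|%:R * q by move: Tq; move: (#|T|%:R : R) => nT; lra.
  rewrite ler_pdivrMr // -(ler_pM2l cpos) mulrA mulfV ?gt_eqF // mul1r.
  have h1 : \sum_(i in T) (c * phi ord0 i - q) <= p - q.
    rewrite -sumE.
    apply: (@le_trans _ _ (\sum_(i in T) Num.max 0 (c * phi ord0 i - q))).
      by apply: ler_sum => i _; rewrite le_max lexx orbT.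
    rewrite big_mkcond; apply: ler_sum => i _.
    by case: (i \in T) => //; rewrite le_max lexx.
  move: h1; rewrite sumrB -mulr_sumr sumr_const -[q *+ _]mulr_natl.
  move: Tq dpos; move: (#|T|%:R : R) => nT; lra.
have sge : c^-1 <= sfun phi.
  pose T0 := finset (fun i => t <= phi ord0 i).
  apply: le_trans (le_bigmax _ _ T0).
  have -> : \sum_(i in T0) phi ord0 i = B by rewrite -Bdef; apply: eq_bigl => i; rewrite inE.
  have -> : (#|T0|%:R : R) = k.
    by rewrite -kdef sumr_const; congr (_ *+ _); apply: eq_card => i; rewrite inE.
  have -> : p - q + k * q = 1 - M * q.
    have : k * q = K%:R * q - M * q by rewrite -cs; ring.
    move: pqK; move: (K%:R : R) => kK; lra.
  by rewrite cE invf_div.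
have sE : sfun phi = c^-1 by apply/le_anti; rewrite sle sge.
have s1 : 1 <= sfun phi.
  apply: le_trans (le_bigmax _ _ [set: 'I_K]%SET).
  have -> : \sum_(i in [set: 'I_K]%SET) phi ord0 i = 1.
    by rewrite -Dsum; apply: eq_bigl => i; rewrite inE.
  rewrite cardsT card_ord.
  have -> : p - q + K%:R * q = 1 by move: pqK; move: (K%:R : R) => kK; lra.
  by rewrite divr1.
apply/rowP => i; rewrite !mxE (max_idPr s1) sE invrK (mulrC (phi ord0 i) c).
case: ltP => h.
  by rewrite (max_idPl _) ?mul0r //; have := below i h; lra.
by rewrite (max_idPr _) // subr_ge0; exact: adm.
Qed.

Lemma MLE_within : {within @Delta R K, continuous (MLEstar p q)}.
Proof.
apply: (@within_of _ _ _ _ MLEg); first exact: MLEg_cont.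
by move=> phi; rewrite inE => Dphi; exact: MLE_eq.
Qed.
End MLE.

Theorem lemma5 (R : realType) (K : nat) (p q : R) :
  (2 <= K)%N -> 0 < q -> q < p -> p + (K - 1)%N%:R * q = 1 ->
  [/\ {within @Delta R K, continuous (Invmap p q)},
      {within @Delta R K, continuous (InvPmap p q)},
      {within @Delta R K, continuous (InvNmap p q)} &
      {within @Delta R K, continuous (MLEstar p q)}].
Proof.
move=> hK hq hqp hpK; split.
- exact: Inv_within.
- exact: (@InvP_within R K p q hK).
- exact: (@InvN_within R K p q hK hqp hpK).
- exact: (@MLE_within R K p q hK hq hqp hpK).
Qed.
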